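(* Let $G$ be a finite simple connected graph and let $\sigma$ be a position of the parallel chip-firing game on $G$ with period $p(\sigma)>1$. Then there exists $T\ge 0$ such that for all $t\ge T$ and all vertices $v\in V(G)$, $U^t\sigma(v)\le 2\deg(v)-1$.
   Context: Parallel chip-firing game: on a finite simple connected graph $G$, a position $\sigma$ assigns a nonnegative integer $\sigma(v)$ (number of chips) to each vertex $v$. In one step, every vertex $v$ with $\sigma(v)\ge \deg(v)$ (a ''firing'' vertex) simultaneously sends one chip to each neighbor; other vertices do not send chips. Writing $\Phi_\sigma(v)$ for the number of neighbors $w$ of $v$ with $\sigma(w)\ge\deg(w)$, the step operator $U$ is given by $U\sigma(v)=\sigma(v)+\Phi_\sigma(v)$ if $\sigma(v)\le \deg(v)-1$ and $U\sigma(v)=\sigma(v)+\Phi_\sigma(v)-\deg(v)$ if $\sigma(v)\ge\deg(v)$. $U^0\sigma=\sigma$, $U^m\sigma=U(U^{m-1}\sigma)$. The period $p(\sigma)$ is the least positive integer $p$ such that $U^{t+p}\sigma=U^t\sigma$ for all sufficiently large $t$. *)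

(* Defs.v *)
From mathcomp Require Import all_boot.
Set Implicit Arguments. Unset Strict Implicit. Unset Printing Implicit Defensive.

Definition simple_graph (V : finType) (e : rel V) : Prop :=
  symmetric e /\ irreflexive e.

Definition connected_graph (V : finType) (e : rel V) : Prop :=
  forall x y : V, connect e x y.

Definition deg (V : finType) (e : rel V) (v : V) : nat := #|[set w | e v w]|.

Definition fires (V : finType) (e : rel V) (s : V -> nat) (v : V) : bool :=
  deg e v <= s v.

Definition Phi (V : finType) (e : rel V) (s : V -> nat) (v : V) : nat :=
  #|[set w | e v w & fires e s w]|.

Definition U (V : finType) (e : rel V) (s : V -> nat) : V -> nat :=
  fun v => if ~~ fires e s v then s v + Phi e s v
           else s v + Phi e s v - deg e v.

Definition Uiter (V : finType) (e : rel V) (m : nat) (s : V -> nat) : V -> nat :=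
  iter m (U e) s.

Definition is_period (V : finType) (e : rel V) (s : V -> nat) (p : nat) : Prop :=
  0 < p /\ exists T0, forall t, T0 <= t -> Uiter e (t + p) s = Uiter e t s.

Definition least_period (V : finType) (e : rel V) (s : V -> nat) (p : nat) : Prop :=
  is_period e s p /\ forall q, is_period e s q -> p <= q.

(* Main.v *)
From Stdlib Require Import Classical FunctionalExtensionality Lia.
Require Import Defs.
From mathcomp Require Import all_boot.
Set Implicit Arguments.

Ltac nlia := repeat match goal with H: is_true (_ <= _) |- _ => move/leP: H; rewrite -?plusE -?minusE -?multE => H end;
  try apply/leP; rewrite -?plusE -?minusE -?multE; lia.

Lemma Phi_le_deg {V : finType} (e : rel V) (s : V -> nat) v : Phi e s v <= deg e v.
Proof.
rewrite /Phi /deg; apply: subset_leq_card; apply/subsetP => w; rewrite !inE.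
by case/andP.
Qed.

Lemma U_bound {V : finType} (e : rel V) (s : V -> nat) v :
  (~~ fires e s v \/ s v < 2 * deg e v) -> U e s v < 2 * deg e v.
Proof.
have hP := Phi_le_deg e s v.
rewrite /U /fires; case: (boolP (deg e v <= s v)) => H /=.
- case=> // h2. nlia.
- move=> _. rewrite -ltnNge in H. nlia.
Qed.

Lemma iterS1 {V : finType} (e : rel V) t s : Uiter e (t + 1) s = U e (Uiter e t s).
Proof. by rewrite /Uiter addn1 iterS. Qed.

Lemma iterSS {V : finType} (e : rel V) t s : Uiter e t.+1 s = U e (Uiter e t s).
Proof. by rewrite /Uiter iterS. Qed.

Lemma fin_exists {V : finType} (Q : V -> nat -> Prop) :
  (forall v, exists T, forall t, T <= t -> Q v t) ->
  exists T, forall t, T <= t -> forall v, Q v t.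
Proof.
move=> H.
suff: forall l : seq V, exists T, forall t, T <= t -> forall v, v \in l -> Q v t.
  case/(_ (enum V)) => T HT; exists T => t Ht v; apply: HT => //; by rewrite mem_enum.
elim=> [|a l [T IH]]; first by exists 0.
case: (H a) => Ta HTa; exists (maxn T Ta) => t Ht v; rewrite inE => /orP[/eqP->|hv].
- apply: HTa; exact: leq_trans (leq_maxr _ _) Ht.
- apply: IH => //; exact: leq_trans (leq_maxl _ _) Ht.
Qed.

Theorem lemma2p1 (V : finType) (e : rel V) (s : V -> nat) (p : nat) :
  simple_graph e -> connected_graph e ->
  least_period e s p -> 1 < p ->
  exists T0, forall t, T0 <= t -> forall v : V,
    Uiter e t s v <= 2 * deg e v - 1.
Proof.
move=> [esym eirr] conn [[p0 [T0 HT0]] pmin] p1.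
apply: (fin_exists (fun v t => Uiter e t s v <= 2 * deg e v - 1)) => v.
case: (classic (exists t0, ~~ fires e (Uiter e t0 s) v)) => [[t0 Ht0]|Hall].
  exists t0.+1 => t Ht.
  suff: Uiter e t s v < 2 * deg e v by move=> h; nlia.
  elim: t Ht => // t IH; rewrite leq_eqVlt => /orP[/eqP[<-]|Ht].
    by rewrite iterSS; apply: U_bound; left.
  by rewrite iterSS; apply: U_bound; right; apply: IH.
exfalso.
have Hv : forall t, fires e (Uiter e t s) v.
  move=> t; apply: NNPP => h; apply: Hall; exists t; by apply/negP.
pose P w := forall t, T0 <= t -> fires e (Uiter e t s) w.
have step : forall u w, P u -> e u w -> P w.
  move=> u w Pu euw t Ht.
  have Hph : Phi e (Uiter e t s) u = deg e u.
    apply/eqP; rewrite eqn_leq Phi_le_deg /=; rewrite leqNgt; apply/negP => hlt.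
    have hdec : Uiter e (t + 1) s u < Uiter e t s u.
      rewrite iterS1 /U (Pu t Ht) /=.
      have := Pu t Ht; rewrite /fires => hf.
      rewrite ltn_subLR; last by apply: leq_trans hf (leq_addr _ _).
      by rewrite addnC ltn_add2r.
    have hmon : forall m, Uiter e (t + 1 + m) s u <= Uiter e (t + 1) s u.
      elim=> [|m IH]; first by rewrite addn0.
      apply: leq_trans IH; rewrite addnS iterSS /U.
      have hf := Pu (t + 1 + m) (leq_trans Ht (leq_trans (leq_addr 1 t) (leq_addr _ _))).
      rewrite hf /=; move: hf; rewrite /fires => hf.
      by rewrite leq_subLR addnC leq_add2r Phi_le_deg.
    have := hmon (p - 1); rewrite -addnA subnKC; last exact: ltnW.
    by rewrite HT0 // leqNgt hdec.
  have : [set w0 | e u w0 & fires e (Uiter e t s) w0] = [set w0 | e u w0].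
    apply/eqP; rewrite eqEcard; apply/andP; split.
      by apply/subsetP => x; rewrite !inE => /andP[].
    by move: Hph; rewrite /Phi /deg => ->.
  move=> hset; move: (hset) => /setP/(_ w); rewrite !inE euw /=; by move->.
have Pall : forall w, P w.
  move=> w; case/connectP: (conn v w) => q pq ->.
  have : P v by move=> t _.
  elim: q v pq {Hall Hv} => [|a q IH] x //= /andP[exa pq] Px.
  by apply: IH => //; apply: step exa.
have : p <= 1.
  apply: pmin; split => //; exists T0 => t Ht.
  apply: functional_extensionality => w; rewrite iterS1 /U (Pall w t Ht) /=.
  have -> : Phi e (Uiter e t s) w = deg e w.
    rewrite /Phi /deg; apply: eq_card => x; rewrite !inE.
    by case: (e w x) => //=; rewrite (Pall x t Ht).
  by rewrite addnK.
by rewrite leqNgt p1.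
Qed.
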